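(* Let $b$ be a positive integer relatively prime to $6$, let $a\in\{0,1,\dots,b-1\}$, and let $f$ be the multiplicative order of $3/2$ modulo $b$. Then for every positive integer $x$ relatively prime to $3$ there is an admissible vector $s\in\mathcal{E}(x)$ such that $v_s(x)\equiv a\pmod b$, $v_s(x)\not\equiv 0\pmod 3$, and $l(s)\le (b-1)f$.
   Context: Let $T_0^{-1}(x)=2x$ and $T_1^{-1}(x)=(2x-1)/3$, viewed as maps $\mathbb{Q}\to\mathbb{Q}$. For $s=(s_0,s_1,\dots,s_k)$ with $k\ge 0$ and all $s_i$ nonnegative integers, the length of $s$ is $l(s)=k$ and $v_s=T_0^{-s_0}\circ T_1^{-1}\circ T_0^{-s_1}\circ T_1^{-1}\circ\cdots\circ T_1^{-1}\circ T_0^{-s_k}$ (with $k$ occurrences of $T_1^{-1}$). The vector $s$ is admissible for a positive integer $x$ if $v_s(x)$ is a positive integer; $\mathcal{E}(x)$ denotes the set of vectors admissible for $x$. *)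

(* Defs.v *)
From HB Require Import structures.
From mathcomp Require Import all_boot all_order all_algebra.
Set Implicit Arguments. Unset Strict Implicit. Unset Printing Implicit Defensive.
Import Order.TTheory GRing.Theory Num.Theory.
Local Open Scope ring_scope.

Definition T0inv (x : rat) : rat := 2 * x.
Definition T1inv (x : rat) : rat := (2 * x - 1) / 3.

(* A vector s = (s_0, ..., s_k) is a nonempty seq nat; its length l(s) = k. *)
Definition is_vec (s : seq nat) : bool := (0 < size s)%N.
Definition len (s : seq nat) : nat := (size s).-1.

Fixpoint vs (s : seq nat) (x : rat) : rat :=
  match s with
  | [::] => x
  | [:: s0] => iter s0 T0inv x
  | s0 :: t => iter s0 T0inv (T1inv (vs t x))
  end.

Definition admissible (x : nat) (s : seq nat) : Prop :=
  is_vec s /\ exists n : nat, (0 < n)%N /\ vs s (x%:R) = (n%:R : rat).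

(* f is the multiplicative order of 3/2 modulo b (b coprime to 6):
   least f > 0 with (3/2)^f = 1 mod b, i.e. 3^f = 2^f mod b. *)
Definition is_order32 (b f : nat) : Prop :=
  (0 < f)%N /\ (3 ^ f = 2 ^ f %[mod b])%N /\
  forall g : nat, (0 < g)%N -> (g < f)%N -> (3 ^ g <> 2 ^ g %[mod b])%N.

(* Main.v *)
Require Import Defs.
From HB Require Import structures.
From mathcomp Require Import all_boot all_order all_algebra.
From mathcomp Require Import ring lra zify.
From mathcomp Require Import cyclic.
Import GRing.Theory Num.Theory.

Lemma three_not_dvd_sq (X : nat) : ~~ (3 %| X) -> 3 %| 1 + 2 * X ^ 2.
Proof.
move=> hX; rewrite /dvdn -modnDm -modnMm -modnXm.
have : X %% 3 < 3 by rewrite ltn_mod.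
have hX' : X %% 3 != 0 by [].
by case: (X %% 3) hX' => [|[|[|]]].
Qed.

Lemma pow2_lift (K : nat) : exists u, 2 ^ (2 * 3 ^ K) = 1 + 3 ^ K.+1 * u /\ ~~ (3 %| u).
Proof.
elim: K => [|K [u [hu h3]]]; first by exists 1.
exists (u + 3 * (3 ^ K * u ^ 2 + 3 ^ (2 * K) * u ^ 3)); split.
  have e1 : 2 ^ (2 * 3 ^ K.+1) = (2 ^ (2 * 3 ^ K)) ^ 3 by rewrite -expnM expnS; congr (2 ^ _); ring.
  rewrite e1 hu.
  have -> : 3 ^ K.+2 = 9 * 3 ^ K by rewrite !expnS mulnA.
  have -> : 3 ^ K.+1 = 3 * 3 ^ K by rewrite !expnS.
  have -> : 3 ^ (2 * K) = 3 ^ K * 3 ^ K by rewrite mulnC expnM.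
  set t := 3 ^ K; ring.
have h3X : 3 %| 3 * (3 ^ K * u ^ 2 + 3 ^ (2 * K) * u ^ 3) by apply: dvdn_mulr.
by rewrite (dvdn_addl _ h3X).
Qed.

Lemma powg_exp (K u i : nat) : exists e, (1 + 3 ^ K * u) ^ i = 1 + 3 ^ K * (i * u + 3 ^ K * e).
Proof.
elim: i => [|i [e he]]; first by exists 0; rewrite expn0 !mul0n !muln0 !addn0.
exists (e + (i * u + 3 ^ K * e) * u); rewrite expnS he; ring.
Qed.

Lemma lift3 (j K : nat) : j <= K -> forall y c, ~~ (3 %| c) -> 3 ^ j.+1 %| y + c ->
  exists rho, 3 ^ K.+1 %| (2 ^ (2 * 3 ^ j)) ^ rho * y + c.
Proof.
move=> hjK y c hc hyc; elim: K hjK => [|K IH] hjK.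
  by exists 0; move: hjK; rewrite leqn0 => /eqP hj; subst j; rewrite expn0 mul1n.
case: (leqP j K) => hjK'; last first.
  have hj : j = K.+1 by apply/eqP; rewrite eqn_leq hjK hjK'.
  by exists 0; rewrite expn0 mul1n -hj.
have [rho hr] := IH hjK'.
case/dvdnP: hr => r hr.
set A := (2 ^ (2 * 3 ^ j)) ^ rho * y in hr.
have [u [hu hu3]] := pow2_lift K.
have hA : ~~ (3 %| A).
  apply/negP => h3A; move/negP: hc; apply.
  have : 3 %| A + c by rewrite hr dvdn_mull // expnS dvdn_mulr.
  by rewrite dvdn_addr.
have hAu : ~~ (3 %| A * u) by rewrite Euclid_dvdM // negb_or hA hu3.
set i := 2 * r * (A * u).
have [e he] := powg_exp K.+1 u i.
exists (rho + 3 ^ (K - j) * i).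
have hg : (2 ^ (2 * 3 ^ j)) ^ (3 ^ (K - j)) = 1 + 3 ^ K.+1 * u.
  by rewrite -expnM -mulnA -expnD subnKC.
rewrite expnD [_ ^ (3 ^ (K - j) * i)]expnM hg mulnAC -/A mulnC.
rewrite he.
have -> : (1 + 3 ^ K.+1 * (i * u + 3 ^ K.+1 * e)) * A + c
   = (A + c) + 3 ^ K.+1 * ((i * u) * A + 3 ^ K.+1 * e * A) by ring.
rewrite hr.
have -> : r * 3 ^ K.+1 + 3 ^ K.+1 * (i * u * A + 3 ^ K.+1 * e * A)
   = 3 ^ K.+1 * (r * (1 + 2 * (A * u) ^ 2) + 3 * (3 ^ K * e * A)) by rewrite /i expnS; ring.
rewrite (expnSr 3 K.+1) dvdn_pmul2l ?expn_gt0 //.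
by apply: dvdn_add; [apply: dvdn_mull; exact: three_not_dvd_sq | exact: dvdn_mulr].
Qed.

Lemma iter_T0 n (q : rat) : iter n T0inv q = (2%:R ^+ n * q)%R.
Proof.
elim: n => [|n IH] /=; first by rewrite expr0 mul1r.
by rewrite IH /T0inv exprS mulrA.
Qed.

Lemma step_alg (R : comNzRingType) (mu1 mu2 t2 t3 th hh Z : R) : (mu1 * mu2 = 1)%R -> (2 * t2 * (hh * th) = 1)%R ->
 (mu2 * (2 * (mu1 * (t2 * Z - t3)) - t3) =
 2 * t2 * (Z + t3 * (hh * th) * (1 - mu2)) - 3 * t3)%R.
Proof. move=> hm e2.
rewrite (_ : (mu2 * _ = 2 * t2 * (Z + t3 * (hh * th) * (1 - mu2)) - 3 * t3 + (mu1 * mu2 - 1) * (2 * t2 * Z - 2 * t3) - (2 * t2 * (hh * th) - 1) * (t3 * (1 - mu2)))%R); last by ring.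
by rewrite hm e2 !subrr !mul0r addr0 subr0.
Qed.

Section Construction.
Variables (f cnt P D x : nat) (tA : bool).

Definition slotA j := (j %% f == 0) && (0 < j %/ f <= cnt).
Definition slotB j := (j %% f == 1) && (0 < j %/ f <= cnt).
Definition upE := (2 * P).+1.
Definition dnE := (3 * P).-1.
Definition dd j := if slotA j then (if tA then upE else dnE)
  else if slotB j then (if tA then dnE else upE) else 2 * P.
Fixpoint mk j := if j is j'.+1 then dd j :: mk j' else [:: D].
Fixpoint G j := if j is j'.+1 then 2 ^ (dd j) * (2 * G j' - 3 ^ j') else 2 ^ D * x.

Hypothesis P_gt0 : 0 < P.
Hypothesis x_gt0 : 0 < x.

Lemma dd_ge2 j : 2 <= dd j.
Proof. rewrite /dd /upE /dnE; case: ifP; case: ifP => *; try case: ifP => *; lia. Qed.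

Lemma G_ge j : 3 ^ j <= G j.
Proof.
elim: j => [|j IH] /=; first by rewrite expn0 muln_gt0 expn_gt0 x_gt0.
have h4 : 4 <= 2 ^ dd j.+1.
  by rewrite (leq_trans _ (leq_pexp2l _ (dd_ge2 j.+1))).
rewrite expnS.
have : 3 ^ j <= 2 * G j - 3 ^ j by lia.
move=> h; apply: (leq_trans _ (leq_mul h4 h)); lia.
Qed.

Lemma size_mk j : size (mk j) = j.+1.
Proof. by elim: j => //= j ->. Qed.

Lemma vs_mk j : vs (mk j) (x%:R) = ((G j)%:R / (3 ^ j)%:R : rat)%R.
Proof.
elim: j => [|j IH].
  by rewrite /= iter_T0 expn0 divr1 natrM natrX.
have -> : vs (mk j.+1) x%:R = iter (dd j.+1) T0inv (T1inv (vs (mk j) x%:R)).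
  by rewrite /=; case: j {IH} => [|j].
rewrite iter_T0 IH /T1inv /= natrM natrX natrB; last by have := G_ge j; lia.
rewrite natrM !natrX exprS.
field. by rewrite expf_eq0 pnatr_eq0 andbF.
Qed.

Hypothesis f_gt1 : 1 < f.

Lemma slotA_next j : slotA j -> slotB j.+1 /\ ~~ slotA j.+1.
Proof.
rewrite /slotA /slotB => /andP [/eqP hm hq].
set q := j %/ f in hq.
have hj : j = q * f by rewrite {1}(divn_eq j f) hm addn0.
have e1 : j.+1 %% f = 1 by rewrite hj -addn1 modnMDl modn_small.
have e2 : j.+1 %/ f = q by rewrite hj -addn1 divnMDl ?divn_small ?addn0 //; lia.
by rewrite e1 e2 hq.
Qed.

Lemma slotB_prev j : slotB j.+1 -> slotA j.
Proof.
rewrite /slotA /slotB => /andP [/eqP hm hq].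
set q := j.+1 %/ f in hq.
have hj : j.+1 = q * f + 1 by rewrite {1}(divn_eq j.+1 f) hm.
have hj' : j = q * f by move: hj; rewrite addn1 => -[].
by rewrite hj' modnMl mulnK ?hq //; lia.
Qed.

Lemma slotA0 : ~~ slotA 0.
Proof. by rewrite /slotA div0n ltnn andbF. Qed.

Fixpoint cntA j := if j is j'.+1 then cntA j' + slotA j' else 0.

Lemma cntA_eq j : cntA j = minn cnt (j.-1 %/ f).
Proof.
have f0 : 0 < f by lia.
elim: j => [|j IH]; first by rewrite /= div0n; lia.
rewrite /= IH.
case: j {IH} => [|j]; first by rewrite /= /slotA div0n; lia.
rewrite /= /slotA divnS // /dvdn.
case: (j.+1 %% f == 0) => /=; lia.
Qed.

Section Ring.
Variable R : comNzRingType.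
Local Open Scope ring_scope.
Hypothesis two_P : (2 : R) ^+ P = 1.
Definition hh : R := 2 ^+ P.-1.
Lemma hh2 : 2 * hh = 1.
Proof. by rewrite /hh -exprS prednK. Qed.
Definition mu1 : R := if tA then 2 else hh.
Definition mu2 : R := if tA then hh else 2.
Lemma mu12 : mu1 * mu2 = 1.
Proof. by rewrite /mu1 /mu2; case: tA; rewrite ?hh2 // mulrC hh2. Qed.

Lemma pow_dd j : (2 : R) ^+ dd j = if slotA j then mu1 else if slotB j then mu2 else 1.
Proof.
have e0 : (2 : R) ^+ (2 * P) = 1 by rewrite mulnC exprM two_P expr1n.
have eu : (2 : R) ^+ upE = 2 by rewrite /upE exprS e0 mulr1.
have ed : (2 : R) ^+ dnE = hh.
  have e : (3 * P).-1 = 2 * P + P.-1 by rewrite -!subn1; lia.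
  by rewrite /dnE /hh e exprD e0 mul1r.
by rewrite /dd /mu1 /mu2; case: ifP => _; case: tA => //; case: ifP.
Qed.

Definition Mm j : R := if slotA j then mu1 else 1.
Fixpoint Del j : R := if j is j'.+1 then
  Del j' + (if slotA j' then 3 ^+ j' * hh ^+ j'.+1 * (1 - mu2) else 0) else 0.

Lemma G_ring j : ((G j)%:R : R) = Mm j * (2 ^+ j * ((2 ^ D * x)%:R + 1 + Del j) - 3 ^+ j).
Proof.
elim: j => [|j IH].
  by rewrite /Mm (negbTE slotA0) /= expr0 !mul1r addr0 addrK.
have hG := G_ge j.
rewrite /= natrM natrB; last by lia.
rewrite natrX pow_dd natrM natrX IH.

have e2 : (2 : R) ^+ j.+1 * hh ^+ j.+1 = 1 by rewrite -exprMn hh2 expr1n.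
have hm := mu12.
rewrite /Mm; case hA: (slotA j).
  have [hB hA'] := slotA_next _ hA.
  rewrite (negbTE hA') hB mul1r.
  rewrite !exprS; rewrite !exprS in e2; rewrite !addrA; exact: step_alg.
case hA': (slotA j.+1); first by rewrite !exprS !mul1r addr0; ring.
case hB: (slotB j.+1).
  by move: (slotB_prev _ hB); rewrite hA.
by rewrite !exprS !mul1r addr0; ring.
Qed.

Lemma Del_cnt j : (3 : R) ^+ f * hh ^+ f = 1 -> Del j = (cntA j)%:R * (hh * (1 - mu2)).
Proof.
move=> h3; elim: j => [|j IH] /=; first by rewrite mul0r.
rewrite IH natrD; case hA: (slotA j); last by rewrite addr0 /= addr0.
move: (hA); rewrite /slotA => /andP [/eqP hm _].
have hj : (j = j %/ f * f)%N by rewrite {1}(divn_eq j f) hm addn0.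
have : (3 : R) ^+ j * hh ^+ j = 1 by rewrite hj mulnC !exprM -exprMn h3 expr1n.
rewrite exprS => e; rewrite (_ : 3 ^+ j * (hh * hh ^+ j) = 3 ^+ j * hh ^+ j * hh); last by ring.
by rewrite e mul1r /=; ring.
Qed.

Lemma Del_3f j : exists w, Del j = 3 ^+ f * w.
Proof.
elim: j => [|j [w IH]] /=; first by exists 0; rewrite mulr0.
case hA: (slotA j); last by exists w; rewrite addr0.
have hfj : (f <= j)%N.
  by move: hA; rewrite /slotA => /andP [_ /andP [h _]]; rewrite -divn_gt0 //; lia.
exists (w + 3 ^+ (j - f) * hh ^+ j.+1 * (1 - mu2)).
by rewrite IH -{1}(subnKC hfj) exprD; ring.
Qed.

End Ring.

Lemma slot_end c : (cnt <= c)%N -> ~~ slotA (c.+1 * f) /\ cntA (c.+1 * f) = cnt.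
Proof.
move=> hc; have f0 : (0 < f)%N by lia.
split.
  by rewrite /slotA mulnK //; apply/negP => /andP [_ /andP [_ h]]; lia.
rewrite cntA_eq.
have -> : (c.+1 * f).-1 = c * f + f.-1 by rewrite mulSn -subn1; lia.
rewrite divnMDl // divn_small ?addn0; lia.
Qed.

End Construction.

Lemma eqZp M n m : 1 < M -> ((n%:R : 'Z_M) = m%:R)%R <-> n %% M = m %% M.
Proof.
move=> hM; split => [h | h]; first by rewrite -!(val_Zp_nat hM) h.
by apply: val_inj; rewrite /= !(val_Zp_nat hM).
Qed.

Lemma eqZp1 M n : 1 < M -> ((n%:R : 'Z_M) = 1)%R <-> n %% M = 1 %% M.
Proof. by move=> hM; rewrite -(eqZp _ _ _ hM) mulr1n. Qed.

Lemma Zp0 M n : 1 < M -> ((n%:R : 'Z_M) = 0)%R <-> M %| n.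
Proof. move=> hM; have e : (0 : 'Z_M)%R = (0%:R)%R by []. rewrite e; split => [/(eqZp _ _ _ hM)|h]; first by rewrite mod0n => /eqP. apply/(eqZp _ _ _ hM); rewrite mod0n; exact/eqP. Qed.

Lemma totient_leq n : totient n <= n.
Proof.
rewrite totient_count_coprime.
apply: (@leq_trans (\sum_(0 <= d < n) 1)); first by apply: leq_sum => i _; case: coprime.
by rewrite sum_nat_const_nat muln1 subn0.
Qed.

Lemma split3 n : 0 < n -> exists v N, n = 3 ^ v * N /\ ~~ (3 %| N).
Proof.
elim: n {-2}n (leqnn n) => [|n IH] m hm m0; first by lia.
case h3: (3 %| m); last by exists 0, m; rewrite expn0 mul1n h3.
case/dvdnP: h3 => q hq; subst m.
have hq1 : q <= n by lia. have hq0 : 0 < q by lia. have [v [N [hN hN3]]] := IH q hq1 hq0.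
by exists v.+1, N; rewrite hN expnS; split => //; ring.
Qed.

Theorem mainTheorem5 (b a f : nat) :
  (0 < b)%N -> coprime b 6 -> (a < b)%N -> is_order32 b f ->
  forall x : nat, (0 < x)%N -> coprime x 3 ->
  exists s : seq nat,
    admissible x s /\
    (exists n : nat, (vs s (x%:R) = (n%:R : rat))%R /\
       (n = a %[mod b])%N /\ (n %% 3 != 0)%N) /\
    (len s <= (b - 1) * f)%N.
Proof.
move=> b0 cop6 ab [f0 [h32 hmin]] x x0 cop3.
have x3 : ~~ (3 %| x) by rewrite -prime_coprime // coprime_sym.
have cb2 : coprime b 2 by move: cop6; rewrite (_ : 6 = 2 * 3) // coprimeMr => /andP [].
have cb3 : coprime b 3 by move: cop6; rewrite (_ : 6 = 2 * 3) // coprimeMr => /andP [].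
case: (ltnP 1 b) => hb; last first.
  have b1 : b = 1 by lia.
  subst b; exists [:: 0]; split; last split.
  - split => //; exists x; split => //.
  - exists x; split => //; split; first by rewrite !modn1.
    by move: x3; rewrite /dvdn.
  - by [].
have hb5 : 5 <= b.
  move: cop6 hb; case: b {b0 ab h32 hmin cb2 cb3} => [|[|[|[|[|b]]]]] //.
have f1 : 1 < f.
  case: f f0 h32 {hmin} => [|[|f]] // _; rewrite !expn1 !modn_small //; lia.
have e2f : 2 ^ f <= 3 ^ f by rewrite leq_exp2r.
have bdiv : b %| 3 ^ f - 2 ^ f by rewrite -eqn_mod_dvd // h32.
have b3f : b < 3 ^ f.
  have : 0 < 3 ^ f - 2 ^ f by rewrite subn_gt0 ltn_exp2r //; lia.
  move/dvdn_leq/(_ bdiv); have := expn_gt0 2 f; lia.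
have tb : totient b < 3 ^ f by apply: leq_ltn_trans (totient_leq b) b3f.
have tb0 : 0 < totient b by rewrite totient_gt0.
have [v [N' [hvN hN3]]] := split3 (totient b) tb0.
have N0 : 0 < N' by move: tb0; rewrite hvN muln_gt0 => /andP [].
have vf : v < f.
  rewrite -(ltn_exp2l _ _ (_ : 1 < 3)) //; apply: leq_ltn_trans tb.
  by rewrite hvN leq_pmulr.
set k := (b - 1) * f.
have e2b : ((2 : 'Z_b) ^+ totient b = 1)%R.
  by rewrite -natrX; apply/(eqZp1 _ _ hb); apply: Euler_exp_totient; rewrite coprime_sym.
have hK : 1 < 3 ^ k.+1 by rewrite -{1}(expn0 3) ltn_exp2l.
have tot3 : totient (3 ^ k.+1) = 2 * 3 ^ k by rewrite totient_pfactor.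
have e23 : ((2 : 'Z_(3 ^ k.+1)) ^+ (2 * 3 ^ k) = 1)%R.
  rewrite -tot3 -natrX; apply/(eqZp1 _ _ hK); apply: Euler_exp_totient.
  by rewrite coprime_pexpr // coprime_sym prime_coprime.
set P := totient b * (2 * 3 ^ k).
have P0 : 0 < P by rewrite muln_gt0 tb0 muln_gt0 expn_gt0.
have e2P1 : ((2 : 'Z_b) ^+ P = 1)%R by rewrite /P exprM e2b expr1n.
have e2P3 : ((2 : 'Z_(3 ^ k.+1)) ^+ P = 1)%R by rewrite /P mulnC exprM e23 expr1n.
have e32 : ((3 : 'Z_b) ^+ f = 2 ^+ f)%R by rewrite -!natrX; apply/(eqZp _ _ _ hb).
have [D0 hD0] : exists D0, 3 ^ k.+1 %| 2 ^ D0 * x + 1.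
  pose t0 := if x %% 3 == 2 then 0 else 1.
  have ht0 : 3 ^ 1 %| 2 ^ t0 * x + 1.
    have hx : x %% 3 = 1 \/ x %% 3 = 2.
      move: x3; rewrite /dvdn; have : x %% 3 < 3 by rewrite ltn_mod.
      by case: (x %% 3) => [|[|[|]]] // _ _; [left | right].
    rewrite expn1 /t0 /dvdn; case: hx => hx; rewrite hx /=.
      by rewrite -modnDml -modnMmr hx.
    by rewrite expn0 mul1n -modnDml hx.
  have [rho0 hrho0] := lift3 0 k (leq0n k) (2 ^ t0 * x) 1 isT ht0.
  exists (2 * rho0 + t0).
  by move: hrho0; rewrite expn0 muln1 expnD expnM mulnA.
have [V eV] : {V | V = (2 ^ D0 * x) %% b} by exists ((2 ^ D0 * x) %% b).
have [c0 ec0] : {c0 | c0 = (2 * (V + (b - a))) %% b} by exists ((2 * (V + (b - a))) %% b).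
have c0b : c0 < b by rewrite ec0 ltn_mod; lia.
have [tA etA] : {tA | tA = (c0 == b.-1)} by exists (c0 == b.-1).
have [cnt ecnt] : {cnt | cnt = if tA then 2 else c0} by exists (if tA then 2 else c0).
have cntb : cnt <= (b - 2).
  rewrite ecnt etA; case: ifP => [_|/negbT h]; first by move: hb5; clear; lia.
  move: h c0b hb5; clear; rewrite -subn1; lia.
have [w hw] := Del_3f f cnt P x tA P0 x0 f1 ('Z_(3 ^ k.+1)) k.
have [c ec] : {c | c = 1 + 3 ^ f * w} by exists (1 + 3 ^ f * w).
have c3 : ~~ (3 %| c).
  have h : 3 %| 3 ^ f * w by rewrite dvdn_mulr // -(prednK f0) expnS dvdn_mulr.
  by rewrite ec (dvdn_addl _ h).
have fk : f.-1 < k.+1.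
  rewrite /k ltnS (leq_trans (leq_pred f)) // leq_pmull //.
  by move: hb5; clear; lia.
have hyc : 3 ^ (f.-1).+1 %| 2 ^ D0 * x + c.
  rewrite prednK // ec addnA dvdn_add ?dvdn_mulr //.
  by apply: dvdn_trans hD0; rewrite dvdn_exp2l // -(prednK f0).
have [rho hrho] := lift3 f.-1 k fk (2 ^ D0 * x) c c3 hyc.
have [X eX] : {X | X = N' ^ (2 * 3 ^ k)} by exists (N' ^ (2 * 3 ^ k)).
have X1 : 1 <= X by rewrite eX expn_gt0 N0.
have hX : 3 ^ k.+1 %| X - 1.
  rewrite -eqn_mod_dvd // eX -tot3; apply/eqP; apply: Euler_exp_totient.
  by rewrite coprime_sym coprime_pexpl // prime_coprime.
case/dvdnP: hX => q hq.
have [D eD] : {D | D = D0 + 2 * 3 ^ f.-1 * rho * X} by exists (D0 + 2 * 3 ^ f.-1 * rho * X).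
pose s := mk f cnt P D tA k.
have [Gk eGk] : {Gk | Gk = G f cnt P D x tA k} by exists (G f cnt P D x tA k).
have [hAk hcntk] := slot_end f cnt P x P0 x0 f1 (b - 2) cntb.
have kk : (b - 2).+1 * f = k by rewrite /k; congr (_ * _); move: hb5; clear; lia.
rewrite kk in hAk hcntk.
have G3 : 3 ^ k.+1 %| Gk + 3 ^ k.
  apply/(Zp0 _ _ hK).
  have e3f : 3 ^ f = 3 * 3 ^ f.-1 by rewrite -expnS prednK.
  have eE : 2 * 3 ^ f.-1 * rho * X = 2 * 3 ^ f.-1 * rho + 2 * 3 ^ k * (3 ^ f * rho * q).
    have -> : X = 1 + q * 3 ^ k.+1 by rewrite -hq subnKC.
    rewrite e3f expnS; ring.
  have e2D : ((2 ^ D * x)%:R : 'Z_(3 ^ k.+1))%R = ((2 ^ (2 * 3 ^ f.-1)) ^ rho * (2 ^ D0 * x))%:R%R.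
    rewrite eD !natrM !natrX exprD eE exprD exprM [(2 ^+ (2 * 3 ^ k * _))%R]exprM e23 expr1n mulr1.
    by rewrite [(2 ^+ D0 * _)%R]mulrC mulrA.
  have hz := hrho; move/(Zp0 _ _ hK): hz; rewrite natrD => hz.
  have e1 : (((2 ^ D * x)%:R : 'Z_(3 ^ k.+1)) = - c%:R)%R by rewrite e2D; apply/eqP; rewrite -addr_eq0; apply/eqP.
  rewrite natrD eGk (G_ring f cnt P D x tA P0 x0 f1 _ e2P3 k) /Mm (negbTE hAk) mul1r e1 hw.
  rewrite ec natrD natrM natrX natr_Zp.
  by rewrite natrX; ring.
have Gb : Gk %% b = (3 ^ k * a) %% b.
  apply/(eqZp _ _ _ hb).
  have htot : totient b %| 2 * 3 ^ f.-1 * rho * X.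
    rewrite hvN (_ : 2 * 3 ^ f.-1 * rho * X = (3 ^ f.-1 * X) * (2 * rho)); last by ring.
    apply: dvdn_mulr; apply: dvdn_mul; first by rewrite dvdn_exp2l // -ltnS prednK.
    by rewrite eX dvdn_exp // muln_gt0 expn_gt0.
  case/dvdnP: htot => m hm.
  have e2D : ((2 ^ D * x)%:R : 'Z_b)%R = V%:R%R.
    rewrite eD natrM natrX exprD hm mulnC exprM e2b expr1n mulr1 -natrX -natrM.
    by rewrite eV Zp_nat_mod.
  have h3hh : ((3 : 'Z_b) ^+ f * hh P 'Z_b ^+ f = 1)%R by rewrite e32 -exprMn hh2 ?expr1n.
  have eDel := Del_cnt f cnt P tA 'Z_b k h3hh; rewrite hcntk in eDel.
  have ec0' : (c0%:R : 'Z_b)%R = (2 * V%:R - 2 * a%:R)%R.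
    rewrite ec0 Zp_nat_mod // natrM natrD natrB; last by move: ab; clear; lia.
    by rewrite pchar_Zp //; ring.
  have eVa : (V%:R + Del f cnt P tA 'Z_b k = a%:R :> 'Z_b)%R.
    rewrite eDel ecnt /mu2; have h2 := hh2 P P0 'Z_b e2P1.
    case htA: tA; rewrite htA in etA.
      have hc : (c0%:R + 1 = 0 :> 'Z_b)%R.
        have -> : c0 = b.-1 by apply/eqP; rewrite -etA.
        by rewrite natr1 prednK ?pchar_Zp //; move: hb; clear; lia.
      rewrite ec0' in hc.
      apply/eqP; rewrite -subr_eq0; apply/eqP.
      transitivity (hh P 'Z_b * (2 * V%:R - 2 * a%:R + 1) + (1 - 2 * hh P 'Z_b) * (V%:R - a%:R + hh P 'Z_b))%R; first by ring.
      by rewrite hc h2 subrr mulr0 mul0r addr0.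
    rewrite ec0'; apply/eqP; rewrite -subr_eq0; apply/eqP.
    transitivity ((1 - 2 * hh P 'Z_b) * (V%:R - a%:R))%R; first by ring.
    by rewrite h2 subrr mul0r.
  have e2k : ((2 : 'Z_b) ^+ k = 3 ^+ k)%R by rewrite /k mulnC !exprM e32.
  rewrite eGk (G_ring f cnt P D x tA P0 x0 f1 _ e2P1 k) /Mm (negbTE hAk) mul1r e2D.
  rewrite -addrA [(1 + _)%R]addrC addrA eVa e2k natrM natrX; ring.
have Gge : 3 ^ k <= Gk by rewrite eGk; apply: G_ge.
have d3k : 3 ^ k %| Gk.
  have h : 3 ^ k %| Gk + 3 ^ k by apply: dvdn_trans G3; rewrite dvdn_exp2l.
  by rewrite -(dvdn_addl _ (dvdnn (3 ^ k))).
have [n en] : {n | n = Gk %/ 3 ^ k} by exists (Gk %/ 3 ^ k).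
have eG : Gk = n * 3 ^ k by rewrite en divnK.
have n0 : 0 < n by move: Gge; rewrite eG; case: (n) => //; rewrite mul0n leqn0 expn_eq0.
have vsn : (vs s x%:R = n%:R :> rat)%R.
  rewrite /s vs_mk // -eGk eG natrM mulfK // pnatr_eq0 expn_eq0 //.
exists s; split; last split.
- split; first by rewrite /is_vec /s size_mk.
  by exists n.
- exists n; split => //; split.
    have h := Gb; rewrite eG mulnC in h.
    move/(eqZp _ _ _ hb): h; rewrite !natrM => h.
    apply/(eqZp _ _ _ hb).
    have hu : ((3 ^ k)%:R : 'Z_b)%R \is a GRing.unit.
      by rewrite unitZpE // coprimeXr.
    apply: (mulIr hu); rewrite mulrC h mulrC //.
  move: G3; rewrite eG -mulSnr expnS dvdn_pmul2r ?expn_gt0 // => h3.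
  apply/negP => /eqP hn; have : 3 %| n by rewrite /dvdn hn.
  by move=> h; move: h3; rewrite -[n.+1]addn1 (dvdn_addr _ h).
- by rewrite /len /s size_mk.
Qed.
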